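(* Let $R$ be a ring. If there exists a finitely generated flat left $R$-module which is not projective, then the ring $Q_l(R)$ is not semi-simple.
   Context: Rings are associative with $1$. A multiplicatively closed subset $S$ ($1\in S$, $0\notin S$) is a left Ore set if $Sr\cap Rs\ne\emptyset$ for all $r\in R,s\in S$, and a left denominator set if moreover $rs=0$ ($s\in S$) implies $tr=0$ for some $t\in S$. $S_0(R)$ is the largest left denominator set of $R$ consisting of regular elements (it exists), and $Q_l(R):=S_0(R)^{-1}R$ is the largest left quotient ring of $R$. *)

(* Defs.v *)
From HB Require Import structures.
From mathcomp Require Import all_boot all_algebra.
Set Implicit Arguments. Unset Strict Implicit. Unset Printing Implicit Defensive.
Import GRing.Theory.
Local Open Scope ring_scope.

(* Rings are associative with 1 (possibly noncommutative): pzRingType.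
   Left R-modules: lmodType R.  Right R-modules: lmodType R^c
   (the right action n.r is written r *: n). *)

Definition is_lin (K : pzRingType) (M N : lmodType K) (f : M -> N) : Prop :=
  forall (r : K) (x y : M), f (r *: x + y) = r *: f x + f y.

Definition fin_gen (R : pzRingType) (M : lmodType R) : Prop :=
  exists s : seq M, forall x : M,
    exists c : 'I_(size s) -> R, x = \sum_(i < size s) c i *: s`_i.

Definition projective (R : pzRingType) (M : lmodType R) : Prop :=
  forall (A B : lmodType R) (g : A -> B) (h : M -> B),
    is_lin g -> is_lin h -> (forall b, exists a, g a = b) ->
    exists k : M -> A, is_lin k /\ forall x, g (k x) = h x.

Definition balanced (R : pzRingType) (N : lmodType R^c) (M : lmodType R)
  (A : zmodType) (b : N -> M -> A) : Prop :=
  [/\ forall n1 n2 m, b (n1 + n2) m = b n1 m + b n2 m,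
      forall n m1 m2, b n (m1 + m2) = b n m1 + b n m2 &
      forall (r : R) n m, b ((r : R^c) *: n) m = b n (r *: m)].

(* The element sum_i n_i (x) m_i of N (x)_R M (given by the list s of pairs)
   is zero; by the universal property of the tensor product this holds iff
   every balanced map kills it. *)
Definition tensor_zero (R : pzRingType) (N : lmodType R^c) (M : lmodType R)
  (s : seq (N * M)) : Prop :=
  forall (A : zmodType) (b : N -> M -> A), balanced b ->
    \sum_(p <- s) b p.1 p.2 = 0.

(* Flat left module: for every injective map f : N' -> N of right modules,
   f (x) id_M : N' (x) M -> N (x) M is injective (every element of N'(x)M is
   of the form sum_i n_i (x) m_i). *)
Definition flat (R : pzRingType) (M : lmodType R) : Prop :=
  forall (N' N : lmodType R^c) (f : N' -> N), is_lin f -> injective f ->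
    forall s : seq (N' * M),
      tensor_zero (map (fun p => (f p.1, p.2)) s) -> tensor_zero s.

Definition regular (R : pzRingType) (s : R) : Prop :=
  (forall r, r * s = 0 -> r = 0) /\ (forall r, s * r = 0 -> r = 0).

Definition mult_closed (R : pzRingType) (S : R -> Prop) : Prop :=
  [/\ S 1, ~ S 0 & forall a b, S a -> S b -> S (a * b)].

Definition left_ore (R : pzRingType) (S : R -> Prop) : Prop :=
  mult_closed S /\
  forall (r s : R), S s -> exists s' r', S s' /\ s' * r = r' * s.

Definition left_denominator (R : pzRingType) (S : R -> Prop) : Prop :=
  left_ore S /\
  forall (r s : R), S s -> r * s = 0 -> exists t, S t /\ t * r = 0.

Definition is_S0 (R : pzRingType) (S : R -> Prop) : Prop :=
  [/\ left_denominator S, (forall s, S s -> regular s) &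
      forall T : R -> Prop, left_denominator T -> (forall t, T t -> regular t) ->
        forall t, T t -> S t].

Definition ring_hom (R Q : pzRingType) (f : R -> Q) : Prop :=
  [/\ forall x y, f (x + y) = f x + f y,
      forall x y, f (x * y) = f x * f y & f 1 = 1].

Definition left_quotient_ring (R Q : pzRingType) (S : R -> Prop) (sigma : R -> Q)
  : Prop :=
  [/\ ring_hom sigma, injective sigma,
      (forall s, S s -> exists u, u * sigma s = 1 /\ sigma s * u = 1) &
      forall q : Q, exists s r, S s /\ sigma s * q = sigma r].

Definition left_ideal (Q : pzRingType) (I : Q -> Prop) : Prop :=
  [/\ I 0, (forall x y, I x -> I y -> I (x + y)) &
      forall a x, I x -> I (a * x)].

Definition semisimple_ring (Q : pzRingType) : Prop :=
  forall I : Q -> Prop, left_ideal I ->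
    exists J : Q -> Prop, [/\ left_ideal J,
      (forall x, I x -> J x -> x = 0) &
      forall x, exists a b, [/\ I a, J b & x = a + b]].

(* Main.v *)
From HB Require Import structures.
From mathcomp Require Import all_boot all_algebra generic_quotient.
From Stdlib Require Import ClassicalEpsilon.
Require Import Defs.
Set Implicit Arguments. Unset Strict Implicit. Unset Printing Implicit Defensive.
Import GRing.Theory.
Local Open Scope ring_scope.

Definition cl (P : Prop) : bool := if excluded_middle_informative P then true else false.
Lemma clP (P : Prop) : reflect P (cl P).
Proof. by rewrite /cl; case: excluded_middle_informative => h; constructor. Qed.

Section Quot.
Variables (V : zmodType) (L : V -> Prop).
Hypothesis L0 : L 0.
Hypothesis LB : forall x y, L x -> L y -> L (x - y).
Definition Lp : {pred V} := fun x => cl (L x).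
Fact Lp_closed : zmod_closed Lp.
Proof.
split; first by apply/clP.
by move=> x y /clP Hx /clP Hy; apply/clP; apply: LB.
Qed.
HB.instance Definition _ := GRing.isZmodClosed.Build V Lp Lp_closed.

Lemma quot_ex : exists (A : zmodType) (pi : V -> A),
  (forall x y, pi (x + y) = pi x + pi y) /\ (forall x, pi x = 0 <-> L x).
Proof.
exists (Quotient.quot Lp), (@pi _ (Quotient.quot Lp)).
split; first by move=> x y; rewrite raddfD.
move=> x; have := Quotient.idealrBE Lp x 0; rewrite subr0 => h.
split.
  move=> hx. suff : x \in Lp by move/clP.
  by rewrite h; apply/eqP; rewrite hx -(raddf0 (@pi _ (Quotient.quot Lp))).
move=> hx; have hx' : x \in Lp by apply/clP.
by move: hx'; rewrite h => /eqP ->; rewrite raddf0.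
Qed.
End Quot.
Section Img.
Variables (R : pzRingType) (m n : nat) (Xc : 'M[R^c]_(n, m)).
Definition Pimg : {pred 'rV[R^c]_m} := fun y => cl (exists v : 'rV[R^c]_n, y = v *m Xc).
Fact Pimg_closed : subsemimod_closed Pimg.
Proof.
split; first split.
- by apply/clP; exists 0; rewrite mul0mx.
- move=> x y /clP [v ->] /clP [w ->]; apply/clP; exists (v + w); by rewrite mulmxDl.
- move=> a x /clP [v ->]; apply/clP; exists (a *: v); by rewrite scalemxAl.
Qed.
HB.instance Definition _ := GRing.isSubmodClosed.Build R^c 'rV[R^c]_m Pimg Pimg_closed.
Definition Nsub := {y : 'rV[R^c]_m | y \in Pimg}.
HB.instance Definition _ := Choice.on Nsub.
HB.instance Definition _ := [isSub of Nsub for @sval _ _].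
HB.instance Definition _ := [SubChoice_isSubZmodule of Nsub by <:].
HB.instance Definition _ := [SubZmodule_isSubLmodule of Nsub by <:].
Lemma preEx (y : Nsub) : exists v : 'rV[R^c]_n, val y == v *m Xc.
Proof. by case: y => y /= /clP [v ->]; exists v. Qed.
Definition pre (y : Nsub) : 'rV[R^c]_n := xchoose (preEx y).
Lemma preP (y : Nsub) : val y = pre y *m Xc.
Proof. apply/eqP; exact: (xchooseP (preEx y)). Qed.
Lemma img_mem (v : 'rV[R^c]_n) : v *m Xc \in Pimg.
Proof. by apply/clP; exists v. Qed.
Lemma val_lin : is_lin (val : Nsub -> 'rV[R^c]_m).
Proof. by move=> r x y; rewrite GRing.valD GRing.valZ. Qed.
End Img.

Lemma fg (Q : pzRingType) (hQ : semisimple_ring Q) n (P : 'rV[Q]_n -> Prop) :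
  P 0 -> (forall x y, P x -> P y -> P (x + y)) -> (forall a x, P x -> P (a *: x)) ->
  exists m (G : 'M[Q]_(m,n)), (forall q, P (q *m G)) /\ forall x, P x -> exists q, x = q *m G.
Proof.
elim: n P => [|n IH].
  move=> P P0 PD PZ; exists 0%N, 0; split; first by move=> q; rewrite mulmx0.
  by move=> x _; exists 0; rewrite mulmx0 thinmx0.
rewrite -[n.+1]/(1 + n)%N => P P0 PD PZ.
pose P' (z : 'rV[Q]_n) := P (row_mx (0 : 'rV[Q]_1) z).
have [|||m' [G' [HG'1 HG'2]]] := IH P'.
- by rewrite /P' row_mx0.
- by move=> x y; rewrite /P' => hx hy; rewrite -[0 : 'rV_1]addr0 -add_row_mx; apply: PD.
- by move=> a x; rewrite /P' => hx; rewrite -(scaler0 _ a) -scale_row_mx; apply: PZ.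
pose I (a : Q) := exists y, P y /\ y 0 0 = a.
have PN : forall x, P x -> P (- x) by move=> x hx; rewrite -scaleN1r; apply: PZ.
have hI : left_ideal I.
  split.
  - by exists 0; split => //; rewrite mxE.
  - move=> a b [y [hy <-]] [z [hz <-]]; exists (y + z); split; [exact: PD | by rewrite mxE].
  - move=> a b [y [hy <-]]; exists (a *: y); split; [exact: PZ | by rewrite mxE].
have [J [hJ hIJ hdec]] := hQ I hI.
have [e [f [[ye [hye ye0]] hf e1]]] := hdec 1.
case: hI => I0 ID IM. case: hJ => J0 JD JM.
exists (1 + m')%N, (col_mx ye (row_mx (0 : 'M[Q]_(m',1)) G')); split.
  move=> q; rewrite -[q]hsubmxK mul_row_col mul_mx_row mulmx0.
  apply: PD; last exact: HG'1.
  by rewrite [lsubmx q]mx11_scalar mul_scalar_mx; apply: PZ.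
move=> x hx.
pose a := x 0 0.
have Ia : I a by exists x.
have hae : a = a * e.
  have af0 : a * f = 0.
    apply: hIJ; last exact: JM.
    have -> : a * f = a - a * e by rewrite -[X in X - _]mulr1 e1 mulrDr addrC addKr.
    apply: ID => //; rewrite -mulN1r; apply: (IM); apply: (IM); by exists ye.
  by rewrite -[LHS]mulr1 e1 mulrDr af0 addr0.
pose x' := x - a *: ye.
have Px' : P x' by apply: PD => //; apply: PN; apply: PZ.
have x'0 : x' 0 0 = 0 by rewrite !mxE ye0 -hae subrr.
have hx' : x' = row_mx 0 (rsubmx x').
  rewrite -[x' in LHS]hsubmxK; congr row_mx.
  apply/matrixP => i j; rewrite !ord1 [RHS]mxE mxE (_ : lshift n 0 = 0); last exact: val_inj.
  exact: x'0.
have [q' hq'] : exists q', rsubmx x' = q' *m G'.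
  by apply: HG'2; rewrite /P' -hx'.
exists (row_mx (a%:M) q').
rewrite mul_row_col mul_mx_row mulmx0 mul_scalar_mx -hq' -hx'.
by rewrite /x' addrC subrK.
Qed.
Section Helpers.
Variables (R Q : pzRingType) (f : R -> Q).
Hypothesis hf : ring_hom f.
Lemma hf0 : f 0 = 0.
Proof. case: hf => fD _ _; apply: (@addrI _ (f 0)); by rewrite addr0 -fD addr0. Qed.
Lemma hfsum (I : Type) (r : seq I) (F : I -> R) : f (\sum_(i <- r) F i) = \sum_(i <- r) f (F i).
Proof. case: hf => fD _ _; exact: (big_morph f fD hf0). Qed.
Lemma mapM m n p (A : 'M[R]_(m,n)) (B : 'M[R]_(n,p)) : map_mx f (A *m B) = map_mx f A *m map_mx f B.
Proof.
apply/matrixP => i j; rewrite !mxE hfsum; apply: eq_bigr => k _.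
by case: hf => _ fM _; rewrite fM !mxE.
Qed.
Lemma map0 m n : map_mx f (0 : 'M[R]_(m,n)) = 0.
Proof. by apply/matrixP => i j; rewrite !mxE hf0. Qed.
End Helpers.

Section Kdef.
Variables (R : pzRingType) (M : lmodType R) (n : nat) (sv : 'I_n -> M).
Definition Kr (k : 'rV[R]_n) := \sum_j k 0 j *: sv j = 0.
Lemma KD x y : Kr x -> Kr y -> Kr (x + y).
Proof.
rewrite /Kr => hx hy. under eq_bigr do rewrite mxE scalerDl.
by rewrite big_split /= hx hy addr0.
Qed.
Lemma KZ a x : Kr x -> Kr (a *: x).
Proof.
rewrite /Kr => hx. under eq_bigr do rewrite mxE -scalerA.
by rewrite -scaler_sumr hx scaler0.
Qed.
Lemma K0 : Kr 0.
Proof. by rewrite /Kr big1 // => j _; rewrite mxE scale0r. Qed.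
End Kdef.

Lemma combine (R Q : pzRingType) (f : R -> Q) (hf : ring_hom f) n (K : 'rV[R]_n -> Prop)
  (K0 : K 0) (KD : forall x y, K x -> K y -> K (x + y)) (KZ : forall a x, K x -> K (a *: x))
  m (G : 'M[Q]_(m,n)) :
  (forall i, exists m' (X : 'M[R]_(m',n)), (forall q, K (q *m X)) /\ exists q, row i G = q *m map_mx f X) ->
  exists m' (X : 'M[R]_(m',n)), (forall q, K (q *m X)) /\ forall q : 'rV_m, exists q' : 'rV_m', q *m G = q' *m map_mx f X.
Proof.
elim: m G => [|m IH] G hG.
  exists 0%N, 0; split; first by move=> q; rewrite mulmx0.
  by move=> q; exists 0; rewrite [G]flatmx0 mulmx0 mul0mx.
move: G hG; rewrite -[m.+1]/(1 + m)%N => G hG.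
have [m2 [X2 [hX2 hq2]]] := IH (dsubmx G) (fun i => ltac:(rewrite row_dsubmx; exact: hG)).
have [m1 [X1 [hX1 [q1 hq1]]]] := hG (lshift m 0).
exists (m1 + m2)%N, (col_mx X1 X2); split.
  by move=> q; rewrite -[q]hsubmxK mul_row_col; apply: KD.
move=> q; have [q' hq'] := hq2 (rsubmx q).
exists (row_mx (lsubmx q *m q1) q').
rewrite map_col_mx mul_row_col -hq' -mulmxA -hq1 -(row_usubmx G 0) row_id.
by rewrite -mul_row_col hsubmxK vsubmxK.
Qed.

Lemma mulcE (R : pzRingType) (a b : R^c) : a * b = (b : R) * (a : R).
Proof. by []. Qed.

Section Lin.
Variables (R : pzRingType) (A B : lmodType R) (g : A -> B).
Hypothesis hg : is_lin g.
Lemma lin0 : g 0 = 0.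
Proof.
have h := hg 1 0 0; rewrite scale1r addr0 scale1r in h.
by apply: (@addrI _ (g 0)); rewrite addr0 -h.
Qed.
Lemma linD x y : g (x + y) = g x + g y.
Proof. by rewrite -[x in LHS]scale1r hg scale1r. Qed.
Lemma linZ r x : g (r *: x) = r *: g x.
Proof. by rewrite -[_ *: x]addr0 hg lin0 addr0. Qed.
Lemma linsum n (c : 'I_n -> R) (v : 'I_n -> A) : g (\sum_j c j *: v j) = \sum_j c j *: g (v j).
Proof.
rewrite (big_morph g linD lin0); apply: eq_bigr => j _; exact: linZ.
Qed.
End Lin.

Section Phi.
Variables (R : pzRingType) (M : lmodType R) (n : nat) (sv : 'I_n -> M).
Definition phi (c : 'rV[R]_n) := \sum_j c 0 j *: sv j.
Lemma phiD x y : phi (x + y) = phi x + phi y.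
Proof. rewrite /phi -big_split /=; apply: eq_bigr => j _; by rewrite mxE scalerDl. Qed.
Lemma phiZ a x : phi (a *: x) = a *: phi x.
Proof. rewrite /phi scaler_sumr; apply: eq_bigr => j _; by rewrite mxE scalerA. Qed.
Lemma phiN x : phi (- x) = - phi x.
Proof. by rewrite -(scaleN1r x) phiZ scaleN1r. Qed.
Lemma phiB x y : phi (x - y) = phi x - phi y.
Proof. by rewrite phiD phiN. Qed.
Lemma phiM (c : 'rV[R]_n) (Z : 'M[R]_n) :
  phi (c *m Z) = \sum_l c 0 l *: \sum_j Z l j *: sv j.
Proof.
rewrite /phi; under eq_bigr do rewrite mxE scaler_suml.
rewrite exchange_big /=; apply: eq_bigr => l _; rewrite scaler_sumr.
by apply: eq_bigr => j _; rewrite scalerA.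
Qed.
End Phi.

Theorem corollary2p12 (R : pzRingType) :
  (exists M : lmodType R, [/\ fin_gen M, flat M & ~ projective M]) ->
  forall (S : R -> Prop), is_S0 S ->
  forall (Q : pzRingType) (sigma : R -> Q),
    left_quotient_ring S sigma -> ~ semisimple_ring Q.
Proof.
move=> [M [[s hs] hflat hnp]] S hS Q sigma [hsig sinj _ _] hQ.
apply: hnp.
pose n := size s.
pose sv (j : 'I_n) : M := s`_j.
have hc : forall x : M, exists c : 'rV[R]_n, x = phi sv c.
  move=> x; have [c hc] := hs x; exists (\row_j c j).
  by rewrite hc /phi; apply: eq_bigr => j _; rewrite mxE.
pose P (x : 'rV[Q]_n) := exists m (X : 'M[R]_(m,n)),
   (forall q, Kr sv (q *m X)) /\ exists q, x = q *m map_mx sigma X.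
have [m0 [G [hG1 hG2]]] : exists m (G : 'M[Q]_(m,n)), (forall q, P (q *m G)) /\ forall x, P x -> exists q, x = q *m G.
  apply: fg => //.
  - exists 0%N, 0; split; first by move=> q; rewrite mulmx0; exact: K0.
    by exists 0; rewrite mul0mx.
  - move=> x y [m1 [X1 [h1 [q1 ->]]]] [m2 [X2 [h2 [q2 ->]]]].
    exists (m1 + m2)%N, (col_mx X1 X2); split.
      by move=> q; rewrite -[q]hsubmxK mul_row_col; apply: KD.
    by exists (row_mx q1 q2); rewrite map_col_mx mul_row_col.
  - move=> a x [m1 [X1 [h1 [q1 ->]]]]; exists m1, X1; split => //.
    by exists (a *: q1); rewrite scalemxAl.
have [m1 [X [hX hXG]]] : exists m' (X : 'M[R]_(m', n)), (forall q, Kr sv (q *m X)) /\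
    forall q : 'rV_m0, exists q' : 'rV_m', q *m G = q' *m map_mx sigma X.
  apply: (combine hsig); [exact: K0 | exact: KD | exact: KZ |].
  by move=> i; rewrite rowE; apply: hG1.
have hKX : forall k, Kr sv k -> exists q : 'rV_m1, map_mx sigma k = q *m map_mx sigma X.
  move=> k hk.
  have [|q hq] := hG2 (map_mx sigma k).
    exists 1%N, k; split; last by exists 1; rewrite mul1mx.
    by move=> q; rewrite [q]mx11_scalar mul_scalar_mx; apply: KZ.
  by have [q' hq'] := hXG q; exists q'; rewrite hq.
have hXrow : forall i, \sum_j X i j *: sv j = 0.
  move=> i; have := hX 'e_i; rewrite /Kr -rowE.
  by under eq_bigr do rewrite mxE.
pose Xc : 'M[R^c]_(n, m1) := \matrix_(j, i) (X i j : R^c).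
pose L (x : 'rV[M]_n) := exists Z : 'M[R]_n, X *m Z = 0 /\ forall l, x 0 l = \sum_j Z l j *: sv j.
have [A [pi [piD piE]]] : exists (A : zmodType) (pi : 'rV[M]_n -> A),
  (forall x y, pi (x + y) = pi x + pi y) /\ (forall x, pi x = 0 <-> L x).
  apply: quot_ex.
    exists 0; split; first by rewrite mulmx0.
    by move=> l; rewrite mxE big1 // => j _; rewrite mxE scale0r.
  move=> x y [Z1 [h1 e1]] [Z2 [h2 e2]]; exists (Z1 - Z2); split.
    by rewrite mulmxBr h1 h2 subrr.
  move=> l; rewrite !mxE e1 e2 -sumrB; apply: eq_bigr => j _.
  by rewrite !mxE scalerBl.
have pi0 : pi 0 = 0 by apply/piE; exists 0; split; [rewrite mulmx0 | move=> l; rewrite mxE big1 // => j _; rewrite mxE scale0r].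
have piB : forall x y, pi (x - y) = pi x - pi y.
  move=> x y; apply: (@addIr _ (pi y)); by rewrite -piD subrK addrNK.
pose vm (v : 'rV[R^c]_n) (x : M) : 'rV[M]_n := \row_j ((v 0 j : R) *: x).
have wd : forall v v' x, v *m Xc = v' *m Xc -> pi (vm v x) = pi (vm v' x).
  move=> v v' x hv; apply/eqP; rewrite -subr_eq0 -piB; apply/eqP/piE.
  have [c hcx] := hc x.
  pose w := v - v'.
  have hw : forall i, \sum_l X i l * (w 0 l : R) = 0.
    move=> i; have : (w *m Xc) 0 i = 0 by rewrite mulmxBl hv subrr mxE.
    rewrite mxE => h; transitivity (\sum_j w 0 j * Xc j i); last exact: h.
    by apply: eq_bigr => l _; rewrite [Xc l i]mxE.
  exists (\matrix_(l, j) ((w 0 l : R) * c 0 j)); split.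
    apply/matrixP => i j; rewrite !mxE.
    under eq_bigr do rewrite mxE mulrA.
    by rewrite -mulr_suml hw mul0r.
  move=> l; rewrite !mxE hcx.
  transitivity ((w 0 l : R) *: phi sv c); first by rewrite /w !mxE; symmetry; exact: (scalerBl (v 0 l : R) (v' 0 l : R) (phi sv c)).
  rewrite /phi scaler_sumr; apply: eq_bigr => j _; by rewrite [in RHS]mxE scalerA.
pose b (y : Nsub Xc) (x : M) : A := pi (vm (pre y) x).
have vmD : forall v v' x, vm (v + v') x = vm v x + vm v' x.
  by move=> v v' x; apply/matrixP => i j; rewrite !mxE; exact: scalerDl.
have vmDr : forall v x x', vm v (x + x') = vm v x + vm v x'.
  by move=> v x x'; apply/matrixP => i j; rewrite !mxE scalerDr.
have vmZ : forall (r : R) v x, vm ((r : R^c) *: v) x = vm v (r *: x).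
  by move=> r v x; apply/matrixP => i j; rewrite !mxE scalerA.
have hb : balanced b.
  split.
  - move=> y1 y2 x; rewrite /b -piD -vmD; apply: wd.
    by rewrite mulmxDl -!preP GRing.valD.
  - by move=> y x1 x2; rewrite /b vmDr piD.
  - move=> r y x; rewrite /b -vmZ; apply: wd.
    by rewrite -scalemxAl -!preP GRing.valZ.
pose yj (j : 'I_n) : Nsub Xc := exist _ ('e_j *m Xc) (img_mem Xc 'e_j).
pose sp := [seq (yj j, sv j) | j <- index_enum 'I_n].
have tz : tensor_zero [seq (val p.1, p.2) | p <- sp].
  move=> A' b' [b'D1 b'D2 b'Z].
  have b'01 : forall x, b' 0 x = 0.
    by move=> x; apply: (@addrI _ (b' 0 x)); rewrite -b'D1 !addr0.
  have b'02 : forall y, b' y 0 = 0.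
    by move=> y; apply: (@addrI _ (b' y 0)); rewrite -b'D2 !addr0.
  rewrite big_map big_map /=.
  have e1 : forall j : 'I_n, (delta_mx (0 : 'I_1) j) *m Xc = \sum_(i < m1) (X i j : R^c) *: delta_mx (0 : 'I_1) i.
    move=> j; rewrite -rowE [LHS]row_sum_delta; apply: eq_bigr => i _; by rewrite !mxE.
  transitivity (\sum_j \sum_i b' 'e_i (X i j *: sv j)).
    apply: eq_bigr => j _; rewrite e1 (big_morph (fun y => b' y (sv j)) (fun a c => b'D1 a c (sv j)) (b'01 (sv j))).
    by apply: eq_bigr => i _; rewrite b'Z.
  rewrite exchange_big /= big1 // => i _.
  by rewrite -(big_morph (b' 'e_i) (b'D2 'e_i) (b'02 'e_i)) hXrow b'02.
have := hflat _ _ _ (@val_lin _ _ _ Xc) val_inj sp tz A b hb.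
rewrite big_map /= => hsum.
have : \sum_j pi (vm 'e_j (sv j)) = 0.
  transitivity (\sum_j b (yj j) (sv j)); last exact: hsum.
  by apply: eq_bigr => j _; apply: wd; rewrite -preP.
rewrite -(big_morph pi piD pi0) => /piE [Z [hZ1 hZ2]].
have hZ : forall l, sv l = \sum_j Z l j *: sv j.
  move=> l; rewrite -hZ2 summxE (bigD1 l) //= !mxE !eqxx /= scale1r big1 ?addr0 //.
  by move=> j hj; rewrite !mxE eq_sym (negbTE hj) scale0r.
have hKZ : forall k, Kr sv k -> k *m Z = 0.
  move=> k hk; have [q hq] := hKX k hk.
  have : map_mx sigma (k *m Z) = 0.
    by rewrite (mapM hsig) hq -mulmxA -(mapM hsig) hZ1 (map0 hsig) mulmx0.
  move/matrixP => h; apply/matrixP => i j; apply: sinj.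
  by have := h i j; rewrite !mxE => ->; rewrite (hf0 hsig).
move=> B1 B2 g h hg hh gs.
pose a (j : 'I_n) : B1 := proj1_sig (constructive_indefinite_description _ (gs (h (sv j)))).
have ha : forall j, g (a j) = h (sv j).
  by move=> j; exact: (proj2_sig (constructive_indefinite_description _ (gs (h (sv j))))).
pose cx (x : M) : 'rV[R]_n := proj1_sig (constructive_indefinite_description _ (hc x)).
have cxP : forall x, x = phi sv (cx x).
  by move=> x; exact: (proj2_sig (constructive_indefinite_description _ (hc x))).
pose kc (c : 'rV[R]_n) := \sum_j (c *m Z) 0 j *: a j.
have kcD : forall c c', kc (c + c') = kc c + kc c'.
  move=> c c'; rewrite /kc -big_split /=; apply: eq_bigr => j _.
  by rewrite mulmxDl mxE scalerDl.
have kcZ : forall r c, kc (r *: c) = r *: kc c.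
  move=> r c; rewrite /kc scaler_sumr; apply: eq_bigr => j _.
  by rewrite -scalemxAl mxE scalerA.
have kcK : forall c, Kr sv c -> kc c = 0.
  move=> c hcK; rewrite /kc (hKZ c hcK) big1 // => j _; by rewrite mxE scale0r.
have kcE : forall c x, phi sv c = x -> kc (cx x) = kc c.
  move=> c x hcx.
  have hK : Kr sv (cx x - c).
    by change (phi sv (cx x - c) = 0); rewrite phiB -cxP hcx subrr.
  by rewrite -[cx x](subrK c) kcD (kcK _ hK) add0r.
exists (fun x => kc (cx x)); split.
  move=> r x y; rewrite (kcE (r *: cx x + cx y) (r *: x + y)); first by rewrite kcD kcZ.
  by rewrite phiD phiZ -!cxP.
move=> x; rewrite /kc (linsum hg).
under eq_bigr do rewrite ha.
rewrite -(linsum hh) -/(phi sv _) phiM.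
under eq_bigr do rewrite -hZ.
by rewrite -/(phi sv _) -cxP.
Qed.
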